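(* For $n\ge1$ and $0\le k\le n-1$, the number of plane trees with $n$ edges and exactly $k$ young leaves is $$\binom{n-1}{k}M_{n-k-1},$$ where $M_m=\sum_{r=0}^{\lfloor m/2\rfloor}\binom{m}{2r}C_r$ is the $m$-th Motzkin number and $C_r=\frac{1}{r+1}\binom{2r}{r}$ is the $r$-th Catalan number.
   Context: A plane tree is a rooted tree in which the children of each vertex are linearly ordered (left to right). A leaf is a vertex with no children; by convention the tree consisting of a single vertex (no edges) has no leaves. A leaf is an old leaf if it is the leftmost child of its parent, and a young leaf otherwise. The Motzkin number $M_m$ equals the number of lattice paths from $(0,0)$ to $(m,0)$ with steps $(1,1),(1,-1),(1,0)$ never going below the $x$-axis. *)

(* Defs.v *)
From mathcomp Require Import all_boot.
Set Implicit Arguments. Unset Strict Implicit. Unset Printing Implicit Defensive.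

Inductive ptree : Type := Node of seq ptree.

Fixpoint edges (t : ptree) : nat :=
  let: Node ts := t in size ts + sumn (map edges ts).

Definition childless (t : ptree) : bool :=
  if t is Node [::] then true else false.

(* Young leaves: leaves that are children of some vertex but not its
   leftmost child.  Only children are counted, so the one-vertex tree
   (whose root has no parent) has no leaves, per the paper's convention. *)
Fixpoint young_leaves (t : ptree) : nat :=
  let: Node ts := t in count childless (behead ts) + sumn (map young_leaves ts).

Definition catalan (r : nat) : nat := 'C(r.*2, r) %/ r.+1.
Definition motzkin (m : nat) : nat :=
  \sum_(r < (m./2).+1) 'C(m, 2 * r) * catalan r.

(* Main.v *)
From HB Require Import structures.
Require Import Defs.
From mathcomp Require Import all_boot zify.
Set Implicit Arguments. Unset Strict Implicit. Unset Printing Implicit Defensive.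

Inductive letter := LY | LF | LU | LD.
Definition letter_eqb a b := match a, b with
  | LY, LY | LF, LF | LU, LU | LD, LD => true | _, _ => false end.
Lemma letter_eqP : Equality.axiom letter_eqb.
Proof. by case; case; constructor. Qed.
HB.instance Definition _ := hasDecEq.Build letter letter_eqP.

Definition leaf := Node [::].
Definition base := Node [:: leaf].
Definition addleaf (t : ptree) := let: Node ts := t in Node (rcons ts leaf).
Definition attach (t u : ptree) := let: Node ts := t in Node (rcons ts u).
Definition nonempty (t : ptree) := ~~ childless t.

Fixpoint vf (h : nat) (w : seq letter) : bool :=
  match w with
  | [::] => h == 0
  | a :: w' => match a with
     | LY | LF => vf h w'
     | LU => vf h.+1 w'
     | LD => if h is h'.+1 then vf h' w' else false end
  end.

Fixpoint dec (w : seq letter) : seq ptree :=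
  match w with
  | [::] => [:: base]
  | a :: w' => let s := dec w' in
    match a with
    | LY => if s is T :: r then addleaf T :: r else [::]
    | LF => if s is T :: r then Node [:: T] :: r else [::]
    | LD => base :: s
    | LU => if s is Tp :: Tq :: r then attach Tp Tq :: r else [::]
    end
  end.

Lemma sumn_rcons s x : sumn (rcons s x) = sumn s + x.
Proof. by rewrite -cats1 sumn_cat /= addn0. Qed.

Lemma edges_addleaf t : edges (addleaf t) = (edges t).+1.
Proof. case: t => ts /=; rewrite size_rcons map_rcons sumn_rcons /=; lia. Qed.

Lemma edges_attach t u : edges (attach t u) = edges t + edges u + 1.
Proof. case: t => ts /=; rewrite size_rcons map_rcons sumn_rcons /=; lia. Qed.

Lemma edges_one t : edges (Node [:: t]) = (edges t).+1.
Proof. by rewrite /= addn0. Qed.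

Lemma yl_addleaf t : nonempty t -> young_leaves (addleaf t) = (young_leaves t).+1.
Proof.
case: t => [[|c cs]] //= _.
rewrite map_rcons sumn_rcons -cats1 count_cat /=; lia.
Qed.

Lemma yl_attach t u : nonempty t -> nonempty u ->
  young_leaves (attach t u) = young_leaves t + young_leaves u.
Proof.
case: t => [[|c cs]] //= _; case: u => [[|d ds]] // _.
rewrite map_rcons sumn_rcons -cats1 count_cat /=; lia.
Qed.

Lemma yl_one t : young_leaves (Node [:: t]) = young_leaves t.
Proof. by rewrite /= addn0. Qed.

Lemma nonempty_edges t : nonempty t -> 0 < edges t.
Proof. by case: t => [[|c cs]]. Qed.

Lemma ne_addleaf t : nonempty (addleaf t). Proof. by case: t => [[|]]. Qed.
Lemma ne_attach t u : nonempty (attach t u). Proof. by case: t => [[|]]. Qed.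
Lemma ne_one t : nonempty (Node [:: t]). Proof. by []. Qed.

Lemma dec_props w h : vf h w ->
  [/\ size (dec w) = h.+1, all nonempty (dec w),
      sumn (map edges (dec w)) = (size w).+1 &
      sumn (map young_leaves (dec w)) = count (pred1 LY) w].
Proof.
elim: w h => [|a w IH] h /=.
  by move/eqP->.
case: a => /=.
- move/IH; case: (dec w) => [|T r] [] //= -> /andP[nT nr] eE eY.
  by rewrite edges_addleaf yl_addleaf // ne_addleaf nr; split => //; lia.
- move/IH; case: (dec w) => [|T r] [] //= -> /andP[nT nr] eE eY.
  rewrite nr; split => //=; rewrite ?addn0; lia.
- move/IH; case: (dec w) => [|Tp [|Tq r]] [] //= [->] /and3P[nT nq nr] eE eY.
  rewrite edges_attach yl_attach // ne_attach nr; split => //; lia.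
- case: h => // h /IH [-> na eE eY] /=; split => //; lia.
Qed.
Definition cls (t : ptree) : letter :=
  let: Node ts := t in
  match ts with
  | [:: c] => if childless c then LD else LF
  | _ => if childless (last leaf ts) then LY else LU
  end.

Lemma cls_addleaf t : nonempty t -> cls (addleaf t) = LY.
Proof. by case: t => [[|c [|d ds]]] //= _; rewrite last_rcons. Qed.

Lemma cls_attach t u : nonempty t -> nonempty u -> cls (attach t u) = LU.
Proof.
by case: t => [[|c [|d ds]]] //= _ nu; rewrite ?last_rcons; case: u nu => [[]].
Qed.

Lemma cls_one t : nonempty t -> cls (Node [:: t]) = LF.
Proof. by case: t => [[]]. Qed.

Lemma top_cls a w h : vf h (a :: w) ->
  exists T r, dec (a :: w) = T :: r /\ cls T = a.
Proof.
move=> v; have [sz ne _ _] := dec_props v.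
move: v => /=; case: a sz ne => /=.
- move=> + + /dec_props [+ + _ _]; case: (dec w) => [|T r] //= _ _ _ /andP[nT _].
  by exists (addleaf T), r; rewrite cls_addleaf.
- move=> + + /dec_props [+ + _ _]; case: (dec w) => [|T r] //= _ _ _ /andP[nT _].
  by exists (Node [:: T]), r; rewrite cls_one.
- move=> + + /dec_props [+ + _ _]; case: (dec w) => [|Tp [|Tq r]] //= _ _ _ /and3P[nT nq _].
  by exists (attach Tp Tq), r; rewrite cls_attach.
- by move=> _ _ _; exists base, (dec w).
Qed.

Lemma addleaf_inj t u : addleaf t = addleaf u -> t = u.
Proof. case: t u => [ts] [us] /= [e]; by case: (rcons_inj e) => ->. Qed.

Lemma attach_inj t u t' u' : attach t u = attach t' u' -> t = t' /\ u = u'.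
Proof. case: t t' => [ts] [us] /= [e]; by case: (rcons_inj e) => -> ->. Qed.

Lemma dec_inj w1 w2 h : vf h w1 -> vf h w2 -> dec w1 = dec w2 -> w1 = w2.
Proof.
elim: w1 w2 h => [|a w1 IH] [|b w2] h //.
- move=> v1 v2 e; move: v1 => /= /eqP h0; subst h; have [T [r [E c]]] := top_cls v2.
  move: e; rewrite E => [[eT _]]; move: c; rewrite -eT => c; subst b; by [].
- move=> v1 v2 e; move: v2 => /= /eqP h0; subst h; have [T [r [E c]]] := top_cls v1.
  move: e; rewrite E => [[eT _]]; move: c; rewrite eT => c; subst a; by [].
move=> v1 v2 e.
have [T1 [r1 [E1 c1]]] := top_cls v1; have [T2 [r2 [E2 c2]]] := top_cls v2.
have ab : a = b.
  by move: e; rewrite E1 E2 -c1 -c2 => [[-> _]].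
clear E1 E2 c1 c2; subst b; congr (_ :: _); move: v1 v2 e; case: a => /=.
- move=> v1 v2; have [+ _ _ _] := dec_props v1; have [+ _ _ _] := dec_props v2.
  case E1: (dec w1) => [|T1' r1'] //; case E2: (dec w2) => [|T2' r2'] // _ _.
  move=> [/addleaf_inj eT er]; apply: IH v1 v2 _; by rewrite E1 E2 eT er.
- move=> v1 v2; have [+ _ _ _] := dec_props v1; have [+ _ _ _] := dec_props v2.
  case E1: (dec w1) => [|T1' r1'] //; case E2: (dec w2) => [|T2' r2'] // _ _.
  move=> [eT er]; apply: IH v1 v2 _; by rewrite E1 E2 eT er.
- move=> v1 v2; have [+ _ _ _] := dec_props v1; have [+ _ _ _] := dec_props v2.
  case E1: (dec w1) => [|T1' [|U1 r1']] //; case E2: (dec w2) => [|T2' [|U2 r2']] // _ _.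
  move=> [/attach_inj [eT eU] er]; apply: IH v1 v2 _; by rewrite E1 E2 eT eU er.
- case: h => // h v1 v2 [e]; exact: IH v1 v2 e.
Qed.

Lemma edges0 t : edges t = 0 -> t = leaf.
Proof. by case: t => [[]]. Qed.

Lemma dec_surj N : forall ts h, size ts = h.+1 -> all nonempty ts ->
  sumn (map edges ts) = N.+1 -> exists w, [/\ size w = N, vf h w & dec w = ts].
Proof.
elim: N => [|N IH] [|[cs] rest] h //= [hs] /andP[nT nr] se.
- have er : sumn (map edges rest) = 0.
    move: se; case: cs nT => [|c cs] //= _; lia.
  have r0 : rest = [::].
    case: rest nr er {hs se} => [|T' r'] //= /andP[nT' _]; have := nonempty_edges nT'; lia.
  subst rest; move: hs => /= h0; subst h; exists [::]; split => //.
  move: se; rewrite /= !addn0; case: cs nT => [|c [|c' cs]] //= _.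
    by move=> /eqP; rewrite eqSS addn0 => /eqP /edges0 ->.
case/lastP: cs nT se => [|p x] // _.
case: p => [|c p].
-
  case Ex: (childless x).
  + have -> : x = leaf by case: x Ex => [[]].
    case: rest nr hs => [|T' r'] nr hs /=.
      rewrite /= !addn0 => [[]] //.
    case: h hs => [|h] // [hs] se.
    have [w [sw vw dw]] := IH (T' :: r') h ltac:(by rewrite /= hs) nr ltac:(rewrite /=; move: se; rewrite /= ; lia).
    by exists (LD :: w); rewrite /= dw sw.
  + have nx : nonempty x by rewrite /nonempty Ex.
    move=> se.
    have [w [sw vw dw]] := IH (x :: rest) h ltac:(by rewrite /= hs) ltac:(by rewrite /= nx nr)
      ltac:(move: se; rewrite /= addn0; lia).
    by exists (LF :: w); rewrite /= dw sw.
- case Ex: (childless x) => se.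
  + have ex : x = leaf by case: x Ex {se} => [[]].
    rewrite ex in se *.
    have [w [sw vw dw]] := IH (Node (c :: p) :: rest) h ltac:(by rewrite /= hs) ltac:(by rewrite /= nr)
      ltac:(move: se; rewrite /= size_rcons map_rcons sumn_rcons /=; lia).
    by exists (LY :: w); rewrite /= dw sw.
  + have nx : nonempty x by rewrite /nonempty Ex.
    have [w [sw vw dw]] := IH (Node (c :: p) :: x :: rest) h.+1 ltac:(by rewrite /= hs)
      ltac:(by rewrite /= nx nr)
      ltac:(move: se; rewrite /= size_rcons map_rcons sumn_rcons /=; lia).
    by exists (LU :: w); rewrite /= dw sw.
Qed.

Fixpoint ws (L h : nat) : seq (seq letter) :=
  match L with
  | 0 => if h == 0 then [:: [::]] else [::]
  | L'.+1 => map (cons LY) (ws L' h) ++ map (cons LF) (ws L' h) ++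
             map (cons LU) (ws L' h.+1) ++
             (if h is h'.+1 then map (cons LD) (ws L' h') else [::])
  end.

Lemma mem_cons_map (a b : letter) w (s : seq (seq letter)) :
  (a :: w \in map (cons b) s) = (a == b) && (w \in s).
Proof.
apply/mapP/andP => [[w' ws' [-> ->]] | [/eqP -> ws']]; last by exists w.
by split.
Qed.

Lemma nil_cons_map (b : letter) (s : seq (seq letter)) :
  ([::] \in map (cons b) s) = false.
Proof. by apply/mapP => [[]]. Qed.

Lemma mem_ws L h w : (w \in ws L h) = (size w == L) && vf h w.
Proof.
elim: L h w => [|L IH] h [|a w] /=.
- by case: h.
- by case: h.
- by rewrite !mem_cat !nil_cons_map; case: h => [|h]; rewrite /= ?in_nil ?nil_cons_map.
- rewrite !mem_cat !mem_cons_map !IH eqSS.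
  case: a; case: h => [|h] //=; rewrite ?in_nil ?mem_cons_map ?IH ?orbF.
  all: by rewrite ?andbF.
Qed.

Lemma has_cons_map (a b : letter) (s1 s2 : seq (seq letter)) : a != b ->
  has (in_mem^~ (mem (map (cons a) s1))) (map (cons b) s2) = false.
Proof.
move=> ab; apply/negbTE; rewrite has_map; apply/hasPn => w _ /=.
by rewrite mem_cons_map eq_sym (negbTE ab).
Qed.

Lemma uniq_ws L h : uniq (ws L h).
Proof.
elim: L h => [|L IH] h /=; first by case: h.
have mu a s : uniq s -> uniq (map (cons a) s).
  by move=> us; rewrite map_inj_uniq // => x y [].
rewrite !cat_uniq !has_cat !mu //.
by case: h => [|h] //=; rewrite ?has_cons_map ?mu.
Qed.

Definition nY (w : seq letter) := count (pred1 LY) w.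
Definition cnt L k h := count (fun w => nY w == k) (ws L h).

Lemma cntS L k h : cnt L.+1 k h =
  (if k is k'.+1 then cnt L k' h else 0) + cnt L k h + cnt L k h.+1 +
  (if h is h'.+1 then cnt L k h' else 0).
Proof.
rewrite /cnt /= !count_cat !count_map.
have -> : count (preim (cons LY) (fun w => nY w == k)) (ws L h) =
          (if k is k'.+1 then count (fun w => nY w == k') (ws L h) else 0).
  case: k => [|k]; last by apply: eq_count => w.
  by apply/eqP; rewrite eqn0Ngt -has_count; apply/hasPn => w.
have e1 a : a != LY -> preim (cons a) (fun w => nY w == k) =1 (fun w => nY w == k).
  by move=> aY w /=; rewrite /nY /= (negbTE aY).
rewrite (eq_count (e1 LF _)) // (eq_count (e1 LU _)) //.
case: h => [|h] /=; rewrite ?addn0 ?addnA //.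
by rewrite count_map (eq_count (e1 LD _)).
Qed.

Fixpoint e (m h : nat) : nat :=
  match m with
  | 0 => (h == 0 : nat)
  | m'.+1 => e m' h + e m' h.+1 + (if h is h'.+1 then e m' h' else 0)
  end.

Lemma cnt_closed L : forall k h, cnt L k h = 'C(L, k) * e (L - k) h.
Proof.
elim: L => [|L IH] k h.
  rewrite /cnt /=; case: h => [|h]; case: k => [|k] //=.
have key : forall k, 'C(L, k.+1) * (e (L - k.+1) h + e (L - k.+1) h.+1 +
   (if h is h'.+1 then e (L - k.+1) h' else 0)) = 'C(L, k.+1) * e (L - k) h.
  move=> k'; case: (ltnP k' L) => kL.
    by rewrite -(subnSK kL).
  by rewrite bin_small ?muln0 //; lia.
rewrite cntS; case: k => [|k].
  rewrite !IH !bin0 !subn0 !mul1n /=; case: h {key} => [|h] /=; rewrite ?IH ?bin0 ?subn0 ?mul1n; lia.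
rewrite subSS binS mulnDl -key; case: h {key} => [|h] /=; rewrite !IH; lia.
Qed.

Fixpoint b (j h : nat) : nat :=
  match j with
  | 0 => (h == 0 : nat)
  | j'.+1 => b j' h.+1 + (if h is h'.+1 then b j' h' else 0)
  end.

Lemma e_sum m : forall h, e m h = \sum_(0 <= j < m.+1) 'C(m, j) * b j h.
Proof.
elim: m => [|m IH] h.
  by rewrite big_nat1 mul1n.
have S1 : forall x, \sum_(0 <= j < m.+1) 'C(m, j) * b j.+1 x =
   \sum_(0 <= j < m.+1) 'C(m, j) * b j x.+1 +
   (if x is x'.+1 then \sum_(0 <= j < m.+1) 'C(m, j) * b j x' else 0).
  move=> x; case: x => [|x] /=.
    by rewrite addn0; apply: eq_bigr => j _ /=; rewrite addn0.
  by rewrite -big_split /=; apply: eq_bigr => j _; rewrite mulnDr.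
rewrite /= !IH -addnA.
transitivity (\sum_(0 <= j < m.+1) 'C(m, j) * b j h +
   \sum_(0 <= j < m.+1) 'C(m, j) * b j.+1 h).
  by rewrite S1; case: (h) => [|h'] //=; rewrite IH.
rewrite (big_nat_recl _ _ _ (leq0n m.+1)).
rewrite (big_nat_recl _ _ _ (leq0n m)).
have -> : \sum_(0 <= i < m.+1) 'C(m.+1, i.+1) * b i.+1 h =
   \sum_(0 <= i < m.+1) 'C(m, i.+1) * b i.+1 h +
   \sum_(0 <= i < m.+1) 'C(m, i) * b i.+1 h.
  by rewrite -big_split /=; apply: eq_bigr => i _; rewrite binS mulnDl addnC.
have -> : \sum_(0 <= i < m.+1) 'C(m, i.+1) * b i.+1 h =
          \sum_(0 <= i < m) 'C(m, i.+1) * b i.+1 h.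
  by rewrite big_nat_recr //= bin_small // mul0n addn0.
rewrite !bin0; lia.
Qed.

Lemma b_big j : forall h, j < h -> b j h = 0.
Proof.
elim: j => [|j IH] h /=; first by case: h.
move=> jh; rewrite IH; last by lia.
by case: h jh => [|h] // jh; rewrite IH.
Qed.

Lemma b_odd j : forall h, odd (j + h) -> b j h = 0.
Proof.
elim: j => [|j IH] h /=; first by case: h.
move=> o; rewrite IH; last by rewrite addnS /=.
case: h o => [|h] // o; rewrite IH //.
by move: o; rewrite addnS /= negbK.
Qed.

Lemma ballot j : forall h d, j = h + 2 * d ->
  b j h + (if d is d'.+1 then 'C(j, d') else 0) = 'C(j, d).
Proof.
elim: j => [|j IH] h d.
  by case: h => //; case: d.
move=> jd; case: h jd => [|h] jd.
-
  case: d jd => [|d] // jd.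
  have j1 : j = 1 + 2 * d by lia.
  have := IH 1 d j1; rewrite /= addn0 => H.
  have sym : 'C(j, d.+1) = 'C(j, d).
    by rewrite -(bin_sub (_ : d.+1 <= j)) ?j1; [congr 'C(_, _); lia | lia].
  rewrite binS sym; case: d {j1 jd sym} H => [|d] H.
    by move: H; rewrite !bin0; lia.
  rewrite binS; lia.
- case: d jd => [|d] jd.
  + have jh : j = h by lia.
    subst j; rewrite /= addn0 b_big // add0n.
    by have := IH h 0 ltac:(lia); rewrite addn0 bin0.
  + have := IH h.+2 d ltac:(lia); have := IH h d.+1 ltac:(lia).
    rewrite /=; case: d {jd} => [|d]; rewrite ?binS ?bin0; lia.
Qed.

Lemma b_cat r : b (2 * r) 0 = catalan r.
Proof.
rewrite /catalan; have := ballot (h := 0) (d := r) (erefl _).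
case: r => [|r]; first by [].
rewrite add0n => H.
have H2 := mul_bin_left (2 * r.+1) r.
suff -> : 'C((r.+1).*2, r.+1) = b (2 * r.+1) 0 * r.+2 by rewrite mulnK.
rewrite -mul2n.
have E : 2 * r.+1 - r = r.+2 by lia.
rewrite E in H2; nia.
Qed.

Lemma sum_pairs K (f : nat -> nat) :
  \sum_(0 <= j < 2 * K) f j = \sum_(0 <= r < K) (f (2 * r) + f (2 * r).+1).
Proof.
elim: K => [|K IH]; first by rewrite !big_geq.
have -> : 2 * K.+1 = (2 * K).+2 by lia.
rewrite big_nat_recr //= big_nat_recr //= IH big_nat_recr //=.
by rewrite addnA.
Qed.

Lemma e_motz m : e m 0 = motzkin m.
Proof.
rewrite e_sum /motzkin -(big_mkord (fun _ => true) (fun r => 'C(m, 2 * r) * catalan r)).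
have hm := odd_double_half m.
transitivity (\sum_(0 <= j < 2 * (m./2).+1) 'C(m, j) * b j 0).
  rewrite [RHS](big_cat_nat (leq0n m.+1) (_ : m.+1 <= 2 * (m./2).+1)); last first.
    by rewrite -muln2 in hm; case: (odd m) hm => /=; lia.
  rewrite [X in _ = _ + X]big1_seq ?addn0 //.
  move=> j /andP[_]; rewrite mem_index_iota => /andP[mj _]; by rewrite bin_small.
rewrite (sum_pairs _ (fun j => 'C(m, j) * b j 0)); apply: eq_bigr => r _.
rewrite b_cat (b_odd (j := (2 * r).+1)); rewrite ?muln0 ?addn0 //=.
by rewrite oddM.
Qed.

Lemma dec_single w : vf 0 w -> dec w = [:: head leaf (dec w)].
Proof.
move/dec_props => [+ _ _ _]; case: (dec w) => [|T [|]] //.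
Qed.

Theorem mainTheorem4 (n k : nat) (hn : 1 <= n) (hk : k <= n - 1) :
  exists f : 'I_('C(n - 1, k) * motzkin (n - k - 1)) -> ptree,
    injective f /\
    (forall t : ptree,
        (edges t = n /\ young_leaves t = k) <-> exists i, f i = t).
Proof.
set W := filter (fun w => nY w == k) (ws (n - 1) 0).
have sW : size W = 'C(n - 1, k) * motzkin (n - k - 1).
  rewrite size_filter -/(cnt (n - 1) k 0) cnt_closed e_motz.
  by have -> : n - 1 - k = n - k - 1 by lia.
have uW : uniq W := filter_uniq _ (uniq_ws _ _).
have inW w : (w \in W) = [&& nY w == k, size w == n - 1 & vf 0 w].
  by rewrite mem_filter mem_ws.
exists (fun i => head leaf (dec (nth [::] W i))); split.
  move=> i j /= eij; apply/val_inj/eqP.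
  have iW : nth [::] W i \in W by rewrite mem_nth // sW ltn_ord.
  have jW : nth [::] W j \in W by rewrite mem_nth // sW ltn_ord.
  move: iW jW; rewrite !inW => /and3P[_ _ vi] /and3P[_ _ vj].
  have li : i < size W by rewrite sW.
  have lj : j < size W by rewrite sW.
  rewrite -(nth_uniq [::] li lj uW); apply/eqP.
  by apply: (dec_inj vi vj); rewrite (dec_single vi) (dec_single vj) eij.
move=> t; split.
  move=> [et yt].
  have nt : nonempty t.
    by move: hn; rewrite -et; case: (t) => [[|]].
  have [w [sw vw dw]] := dec_surj (N := n - 1) (ts := [:: t]) (h := 0) erefl
      ltac:(by rewrite /= nt) ltac:(by rewrite /= addn0; lia).
  have [_ _ _ eY] := dec_props vw.
  have wW : w \in W.
    have yw : nY w = k by rewrite /nY -eY dw /= addn0 yt.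
    by rewrite inW yw vw sw !eqxx.
  have iN : index w W < 'C(n - 1, k) * motzkin (n - k - 1) by rewrite -sW index_mem.
  by exists (Ordinal iN); rewrite /= nth_index // dw.
move=> [i <-].
have iW : nth [::] W i \in W by rewrite mem_nth // sW ltn_ord.
move: iW; rewrite inW => /and3P[/eqP yk /eqP sz vi].
have [_ _ eE eY] := dec_props vi.
move: eE eY; rewrite (dec_single vi) /= !addn0 sz => -> ->.
split; [lia | exact: yk].
Qed.
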